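(* Let $p=(p_0,\dots,p_{m-1})\in\{0,1\}^m$, $m\ge1$, and let $\tilde c_\infty[p]$ be the limit of the reverse CQCA evolution started from the $v_p$-periodic initial configuration $\tilde c_0[p]$. Then every cell $(x,0)$ with $x\le0$ has a defined sum bit $b_{-x}$ in $\tilde c_\infty[p]$, and the 2-adic integer $\sum_{j\ge0}b_j2^j\in\mathbb{Z}_2$ equals $Q^{-1}(p^\infty)$, the Collatz cyclic number associated to $p$.
   Context: $\mathbb{Z}_2$ is the ring of 2-adic integers. The Collatz map extends to $T:\mathbb{Z}_2\to\mathbb{Z}_2$, $T(z)=z/2$ if $z\equiv0\pmod2$ and $T(z)=(3z+1)/2$ otherwise. $Q:\mathbb{Z}_2\to\{0,1\}^{\mathbb{N}}$, $Q(z)=(T^i(z)\bmod2)_{i\ge0}$, is a bijection (known fact). $p^\infty$ denotes the infinite periodic sequence $pp p\cdots$; $Q^{-1}(p^\infty)$ is the Collatz cyclic number associated to $p$. Notation: $E=(1,0)$, $W=(-1,0)$, $N=(0,1)$, $S=(0,-1)$; $[P]\in\{0,1\}$ equals $1$ iff $P$ holds. States: $\Sigma=\{0,1,\bot\}^2\setminus\{(\bot,0),(\bot,1)\}$, $(s,c)$ with sum bit $s$ and carry bit $c$; undefined if $(\bot,\bot)$, half-defined if $s\in\{0,1\},c=\bot$, defined if $s,c\in\{0,1\}$. The reverse CQCA: one step $F(C)$ of $C:\mathbb{Z}^2\to\Sigma$ first applies the non-local rule giving $C'$: $C'(u)=(0,1)$ if $C(u+W)=(1,\bot)$, $C(u)\in\{(0,\bot),(\bot,\bot)\}$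 and $C(u+iE)\in\{(0,\bot),(\bot,\bot)\}$ for all $i\ge1$; otherwise $C'(u)=C(u)$. Then the local rule on $C'$ at all cells simultaneously: (i) if $C'(u)=(s,\bot)$ half-defined and $C'(u+E)=(s',c')$ defined, $F(C)(u)=(s,[s+s'+c'\ge2])$; (ii) if $C'(u)=(\bot,\bot)$, $C'(u+E)=(s',c')$ is defined and $C'(u+S)$ has sum bit $s''\in\{0,1\}$, then $F(C)(u)=(t,[t+s'+c'\ge2])$ with $t=(s''+s'+c')\bmod2$; (iii) otherwise $F(C)(u)=C'(u)$. Cyclic world: let $k$ be the number of $1$s in $p$ and $v_p=(-m,-k)$. Positions $u_0=(0,0)$, $u_{i+1}=u_i+W$ if $p_i=0$ and $u_{i+1}=u_i+W+S$ if $p_i=1$ (so $u_m=u_0+v_p$). The configuration $\tilde c_0[p]$ is defined by $\tilde c_0[p](u_i+tv_p)=(p_i,\bot)$ for $0\le i<m$, $t\in\mathbb{Z}$, and $(\bot,\bot)$ at all other cells; it is invariant under translation by $v_p$ (equivalently it lives on $\mathbb{Z}^2$ modulo $v_p$), and this invariance is preserved by $F$. Each cell's state in $F^i(\tilde c_0[p])$ is eventually constant; $\tilde c_\infty[p]$ is the pointwise limit. *)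

(* Defs.v *)
From Stdlib Require Import ZArith List Arith Bool ClassicalEpsilon.
Import ListNotations.
Open Scope Z_scope.

(** * Cell states  Sigma = {0,1,bot}^2 \ {(bot,0),(bot,1)} *)
Inductive state : Type :=
| Undef : state                      (* (bot, bot) *)
| Half  : bool -> state              (* (s, bot)   *)
| Def   : bool -> bool -> state.     (* (s, c)     *)

Definition sumbit (s : state) : option bool :=
  match s with Undef => None | Half b => Some b | Def b _ => Some b end.

Definition cell := (Z * Z)%type.
Definition config := cell -> state.

Definition addc (u v : cell) : cell := (fst u + fst v, snd u + snd v).
Definition dirE : cell := (1, 0).
Definition dirW : cell := (-1, 0).
Definition dirN : cell := (0, 1).
Definition dirS : cell := (0, -1).
Definition scalec (t : Z) (v : cell) : cell := (t * fst v, t * snd v).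

Definition maj (a b c : bool) : bool := (a && b) || (a && c) || (b && c).

Definition zeroish (s : state) : Prop := s = Half false \/ s = Undef.

(** the non-local rule (its condition quantifies over infinitely many cells,
    hence classical decision) *)
Definition nonlocal_cond (C : config) (u : cell) : Prop :=
  C (addc u dirW) = Half true /\ zeroish (C u) /\
  (forall i : Z, 1 <= i -> zeroish (C (addc u (scalec i dirE)))).

Definition nonlocal_rule (C : config) : config := fun u =>
  if excluded_middle_informative (nonlocal_cond C u) then Def false true else C u.

Definition local_rule (C' : config) : config := fun u =>
  match C' u, C' (addc u dirE) with
  | Half s, Def s' c' => Def s (maj s s' c')
  | Undef, Def s' c' =>
      match sumbit (C' (addc u dirS)) with
      | Some s'' => let t := xorb s'' (xorb s' c') in Def t (maj t s' c')
      | None => Undef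
      end
  | x, _ => x
  end.

Definition F (C : config) : config := local_rule (nonlocal_rule C).

Definition pbit (p : list bool) (i : nat) : bool := nth i p false.
Definition ones (l : list bool) : nat := length (filter (fun b => b) l).
Definition kpref (p : list bool) (i : nat) : nat := ones (firstn i p).

Definition upos (p : list bool) (i : nat) : cell :=
  (- Z.of_nat i, - Z.of_nat (kpref p i)).
Definition vp (p : list bool) : cell :=
  (- Z.of_nat (length p), - Z.of_nat (ones p)).

(** c~_0[p]: (p_i, bot) at u_i + t v_p (0 <= i < m, t in Z), (bot,bot) elsewhere.
    Since 0 <= i < m, the pair (i,t) is determined by the x-coordinate:
    -x = i + t m, i.e. i = (-x) mod m, t = (-x) div m. *)
Definition c0 (p : list bool) : config := fun u =>
  let m := Z.of_nat (length p) in
  let i := Z.to_nat ((- fst u) mod m) in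
  let t := (- fst u) / m in
  let w := addc (upos p i) (scalec t (vp p)) in
  if (Z.eqb (fst u) (fst w) && Z.eqb (snd u) (snd w))%bool then Half (pbit p i) else Undef.

Definition cfg (p : list bool) (n : nat) : config := Nat.iter n F (c0 p).

(** * 2-adic integers, modelled by their binary digit sequences:
      z = sum_{j>=0} z_j 2^j  corresponds to  (fun j => z_j). *)
Definition Z2 := nat -> bool.

Fixpoint trunc (n : nat) (z : Z2) : nat :=
  match n with
  | O => 0%nat
  | S n' => (trunc n' z + (if z n' then 2 ^ n' else 0))%nat
  end.

Definition Tnat (n : nat) : nat :=
  if Nat.even n then (n / 2)%nat else ((3 * n + 1) / 2)%nat.

(** Collatz map T on Z_2: since T(z) mod 2^(k+1) only depends on z mod 2^(k+2)
    and agrees with Tnat (z mod 2^(k+2)) mod 2^(k+1), digit k of T(z) is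
    digit k of Tnat (z mod 2^(k+2)). *)
Definition T (z : Z2) : Z2 := fun k => Nat.testbit (Tnat (trunc (k + 2) z)) k.

Definition Q (z : Z2) : nat -> bool := fun i => Nat.iter i T z 0%nat.

Definition pinf (p : list bool) : nat -> bool := fun i => pbit p (i mod length p).

(* Main.v *)
Require Import Defs.
From Stdlib Require Import ZArith List Arith Lia Bool Classical ClassicalEpsilon FunctionalExtensionality.
Import ListNotations.


Definition cfgc (c : config) (n : nat) : config := Nat.iter n F c.
Definition isDef (s : state) : Prop := match s with Def _ _ => True | _ => False end.

Lemma nl_def C v s t : C v = Def s t -> nonlocal_rule C v = Def s t.
Proof.
  intro H. unfold nonlocal_rule.
  destruct (excluded_middle_informative _) as [[_ [Hz _]]|_]; [|exact H].
  rewrite H in Hz. destruct Hz; discriminate.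
Qed.

Lemma nl_nocond C v : ~ nonlocal_cond C v -> nonlocal_rule C v = C v.
Proof. intro H. unfold nonlocal_rule. destruct (excluded_middle_informative _); tauto. Qed.

Lemma nl_cond C v : nonlocal_cond C v -> nonlocal_rule C v = Def false true.
Proof. intro H. unfold nonlocal_rule. destruct (excluded_middle_informative _); tauto. Qed.

Lemma nl_cases C v : nonlocal_rule C v = C v \/ (zeroish (C v) /\ nonlocal_rule C v = Def false true).
Proof. unfold nonlocal_rule. destruct (excluded_middle_informative _) as [[_ [Hz _]]|_]; auto. Qed.

Lemma nl_some C v b : sumbit (C v) = Some b -> sumbit (nonlocal_rule C v) = Some b.
Proof.
  intro H. destruct (nl_cases C v) as [E|[Hz E]]; rewrite E; [exact H|].
  destruct Hz as [Hz|Hz]; rewrite Hz in H; simpl in H; [inversion H; reflexivity| discriminate].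
Qed.

Lemma loc_def C' v s t : C' v = Def s t -> local_rule C' v = Def s t.
Proof. intro H. unfold local_rule. rewrite H. destruct (C' (addc v dirE)); reflexivity. Qed.

Lemma loc_some C' v b : sumbit (C' v) = Some b -> sumbit (local_rule C' v) = Some b.
Proof.
  intro H. unfold local_rule.
  destruct (C' v) eqn:E; simpl in H; try discriminate;
  destruct (C' (addc v dirE)); simpl; try exact H; try (destruct (sumbit _)); simpl; try exact H.
Qed.

Lemma F_def C v s t : C v = Def s t -> F C v = Def s t.
Proof. intro H. unfold F. apply loc_def, nl_def, H. Qed.
Lemma F_some C v b : sumbit (C v) = Some b -> sumbit (F C v) = Some b.
Proof. intro H. unfold F. apply loc_some, nl_some, H. Qed.

Lemma F_half C v b : C v = Half b -> F C v = Half b \/ exists t, F C v = Def b t.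
Proof.
  intro H. unfold F, local_rule. destruct (nl_cases C v) as [E|[Hz E]]; rewrite E.
  - rewrite H. destruct (nonlocal_rule C (addc v dirE)); eauto.
  - rewrite H in Hz. destruct Hz as [Hz|Hz]; inversion Hz; subst. right. exists true.
    destruct (nonlocal_rule C (addc v dirE)); reflexivity.
Qed.

Lemma F_undef C v : C v = Undef -> F C v = Undef \/ exists s t, F C v = Def s t.
Proof.
  intro H. unfold F, local_rule. destruct (nl_cases C v) as [E|[Hz E]]; rewrite E.
  - rewrite H. destruct (nonlocal_rule C (addc v dirE)); eauto.
    destruct (sumbit _); eauto.
  - right. exists false, true. destruct (nonlocal_rule C (addc v dirE)); reflexivity.
Qed.

Lemma cfgc_S c n : cfgc c (S n) = F (cfgc c n). Proof. reflexivity. Qed.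

Lemma persist_def c v s t n k : cfgc c n v = Def s t -> cfgc c (k + n) v = Def s t.
Proof. intro H. induction k; [exact H|]. rewrite Nat.add_succ_l, cfgc_S. apply F_def; exact IHk. Qed.

Lemma persist_some c v b n k : sumbit (cfgc c n v) = Some b -> sumbit (cfgc c (k + n) v) = Some b.
Proof. intro H. induction k; [exact H|]. rewrite Nat.add_succ_l, cfgc_S. apply F_some; exact IHk. Qed.

Lemma persist_le_def c v s t n n' : (n <= n')%nat -> cfgc c n v = Def s t -> cfgc c n' v = Def s t.
Proof. intros Hle H. replace n' with ((n' - n) + n)%nat by lia. apply persist_def; exact H. Qed.

Lemma persist_le_some c v b n n' : (n <= n')%nat -> sumbit (cfgc c n v) = Some b -> sumbit (cfgc c n' v) = Some b.
Proof. intros Hle H. replace n' with ((n' - n) + n)%nat by lia. apply persist_some; exact H. Qed.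

Lemma half_fwd c v b : c v = Half b -> forall n, cfgc c n v = Half b \/ exists t, cfgc c n v = Def b t.
Proof.
  intros H n. induction n as [|n IH]; [left; exact H|].
  rewrite cfgc_S. destruct IH as [E|[t E]].
  - apply F_half; exact E.
  - right. exists t. apply F_def; exact E.
Qed.

Lemma undef_fwd c v : c v = Undef -> forall n, cfgc c n v = Undef \/ exists s t, cfgc c n v = Def s t.
Proof.
  intros H n. induction n as [|n IH]; [left; exact H|].
  rewrite cfgc_S. destruct IH as [E|[s [t E]]].
  - apply F_undef; exact E.
  - right. exists s, t. apply F_def; exact E.
Qed.

Lemma half_bwd c v b n : cfgc c n v = Half b -> c v = Half b.
Proof.
  revert b. induction n as [|n IH]; intros b H; [exact H|].
  rewrite cfgc_S in H. destruct (cfgc c n v) eqn:E.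
  - destruct (F_undef _ _ E) as [E'|[s [t E']]]; rewrite E' in H; discriminate.
  - destruct (F_half _ _ _ E) as [E'|[t E']]; rewrite E' in H; try discriminate.
    inversion H; subst. apply IH; congruence.
  - rewrite (F_def _ _ _ _ E) in H; discriminate.
Qed.

Lemma ev_const c v : exists s, exists N, forall n, (N <= n)%nat -> cfgc c n v = s.
Proof.
  destruct (classic (exists n s t, cfgc c n v = Def s t)) as [[n [s [t H]]]|H].
  - exists (Def s t), n. intros n' Hn. eapply persist_le_def; eauto.
  - exists (c v), 0%nat. intros n _. induction n as [|n IH]; [reflexivity|].
    rewrite cfgc_S. destruct (c v) eqn:E.
    + destruct (F_undef _ _ IH) as [E'|[s [t E']]]; [exact E'|].
      exfalso; apply H; exists (S n), s, t; exact E'.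
    + destruct (F_half _ _ _ IH) as [E'|[t E']]; [exact E'|].
      exfalso; apply H; exists (S n), b, t; exact E'.
    + exfalso. apply H. exists 0%nat, b, b0. exact E.
Qed.

Definition lim (c : config) (v : cell) : state :=
  proj1_sig (constructive_indefinite_description _ (ev_const c v)).

Lemma lim_spec c v : exists N, forall n, (N <= n)%nat -> cfgc c n v = lim c v.
Proof. unfold lim. destruct (constructive_indefinite_description _ _) as [s Hs]. exact Hs. Qed.

Lemma lim_of_def c v n s t : cfgc c n v = Def s t -> lim c v = Def s t.
Proof.
  intro H. destruct (lim_spec c v) as [N HN]. rewrite <- (HN (max n N)) by lia.
  eapply persist_le_def; [|exact H]. lia.
Qed.

Lemma lim_of_some c v n b : sumbit (cfgc c n v) = Some b -> sumbit (lim c v) = Some b.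
Proof.
  intro H. destruct (lim_spec c v) as [N HN]. rewrite <- (HN (max n N)) by lia.
  eapply persist_le_some; [|exact H]. lia.
Qed.

Lemma lim_of_half c v b : c v = Half b -> sumbit (lim c v) = Some b.
Proof.
  intro H. apply (lim_of_some c v 0). simpl. rewrite H. reflexivity.
Qed.

Lemma first_def c v N : ~ isDef (c v) -> isDef (cfgc c N v) ->
  exists n, ~ isDef (cfgc c n v) /\ isDef (cfgc c (S n) v).
Proof.
  intros H0. induction N as [|N IH]; intro HN; [contradiction|].
  destruct (classic (isDef (cfgc c N v))) as [HD|HD]; [apply IH; exact HD| exists N; split; assumption].
Qed.

Lemma step_rule C u t cc : ~ isDef (C u) -> ~ nonlocal_cond C u -> F C u = Def t cc ->
  (C u = Half t /\ exists s' c', nonlocal_rule C (addc u dirE) = Def s' c' /\ cc = maj t s' c') \/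
  (C u = Undef /\ exists s' c' s'', nonlocal_rule C (addc u dirE) = Def s' c' /\
     sumbit (nonlocal_rule C (addc u dirS)) = Some s'' /\ t = xorb s'' (xorb s' c') /\ cc = maj t s' c').
Proof.
  intros HD HN HF. unfold F, local_rule in HF. rewrite (nl_nocond C u HN) in HF.
  revert HD HF. destruct (C u) eqn:E; intros HD HF; simpl in HD; [| |contradiction].
  - right. split; [reflexivity|].
    destruct (nonlocal_rule C (addc u dirE)) eqn:E2; try discriminate.
    destruct (sumbit (nonlocal_rule C (addc u dirS))) eqn:E3; try discriminate.
    inversion HF; subst. eexists _, _, _. repeat split; try reflexivity; try exact E3.
  - left. destruct (nonlocal_rule C (addc u dirE)) eqn:E2; try (inversion HF; fail).
    inversion HF; subst. split; [reflexivity|]. eexists _, _. split; reflexivity.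
Qed.

Lemma lim_rel_undef c u t cc : c u = Undef -> (forall n, ~ nonlocal_cond (cfgc c n) u) ->
  lim c u = Def t cc -> exists s' c' s'', lim c (addc u dirE) = Def s' c' /\
  sumbit (lim c (addc u dirS)) = Some s'' /\ t = xorb s'' (xorb s' c') /\ cc = maj t s' c'.
Proof.
  intros H0 HN HL. destruct (lim_spec c u) as [N HNs].
  assert (HD : isDef (cfgc c N u)) by (rewrite HNs by lia; rewrite HL; exact I).
  assert (H0' : ~ isDef (c u)) by (rewrite H0; simpl; tauto).
  destruct (first_def c u N H0' HD) as [n [Hn HSn]].
  destruct (undef_fwd c u H0 n) as [En|[s [t' En]]]; [|rewrite En in Hn; simpl in Hn; tauto].
  destruct (cfgc c (S n) u) eqn:ES; simpl in HSn; try contradiction.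
  rewrite (lim_of_def _ _ _ _ _ ES) in HL. inversion HL; subst.
  rewrite cfgc_S in ES.
  destruct (step_rule (cfgc c n) u t cc Hn (HN n) ES) as [[Hh _]|[_ [s' [c' [s'' [A [B [C D]]]]]]]].
  - rewrite En in Hh; discriminate.
  - exists s', c', s''. split; [|split; [|split; assumption]].
    + apply (lim_of_def c _ (S n)). rewrite cfgc_S. unfold F. apply loc_def. exact A.
    + apply (lim_of_some c _ (S n)). rewrite cfgc_S. unfold F. apply loc_some. exact B.
Qed.

Lemma lim_rel_half c u t cc : c u = Half true -> lim c u = Def t cc ->
  t = true /\ exists s' c', lim c (addc u dirE) = Def s' c' /\ cc = maj true s' c'.
Proof.
  intros H0 HL. destruct (lim_spec c u) as [N HNs].
  assert (HD : isDef (cfgc c N u)) by (rewrite HNs by lia; rewrite HL; exact I).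
  assert (H0' : ~ isDef (c u)) by (rewrite H0; simpl; tauto).
  destruct (first_def c u N H0' HD) as [n [Hn HSn]].
  destruct (half_fwd c u true H0 n) as [En|[t' En]]; [|rewrite En in Hn; simpl in Hn; tauto].
  destruct (cfgc c (S n) u) eqn:ES; simpl in HSn; try contradiction.
  rewrite (lim_of_def _ _ _ _ _ ES) in HL. inversion HL; subst.
  rewrite cfgc_S in ES.
  assert (HNc : ~ nonlocal_cond (cfgc c n) u).
  { intros [_ [Hz _]]. rewrite En in Hz. destruct Hz; discriminate. }
  destruct (step_rule (cfgc c n) u t cc Hn HNc ES) as [[Hh [s' [c' [A B]]]]|[Hh _]].
  - rewrite En in Hh. inversion Hh; subst. split; [reflexivity|]. exists s', c'. split; [|try reflexivity; try exact B].
    apply (lim_of_def c _ (S n)). rewrite cfgc_S. unfold F. apply loc_def. exact A.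
  - rewrite En in Hh; discriminate.
Qed.


Definition Kstep (K : Z -> Z) (pb : Z -> bool) := forall j, (K (j+1) = K j + (if pb j then 1 else 0))%Z.
Definition Cform (c : config) K pb := forall x y, c (x, y) = if Z.eqb y (- K (- x)) then Half (pb (- x)) else Undef.

Lemma isDef_ex s : isDef s -> exists a b, s = Def a b.
Proof. destruct s; simpl; try tauto. intros _. eauto. Qed.

Local Open Scope Z_scope.

Lemma addE x y : addc (x, y) dirE = (x + 1, y).
Proof. unfold addc, dirE; simpl. f_equal; ring. Qed.
Lemma addW x y : addc (x, y) dirW = (x - 1, y).
Proof. unfold addc, dirW; simpl. f_equal; ring. Qed.
Lemma addS x y : addc (x, y) dirS = (x, y - 1).
Proof. unfold addc, dirS; simpl. f_equal; ring. Qed.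

Lemma K_mono_n K pb : Kstep K pb -> forall (n : nat) a, K a <= K (a + Z.of_nat n).
Proof.
  intros HK n. induction n as [|n IH]; intro a.
  - rewrite Z.add_0_r. lia.
  - rewrite Nat2Z.inj_succ, <- Z.add_1_r, Z.add_assoc, HK. specialize (IH a).
    destruct (pb _); lia.
Qed.

Lemma K_mono K pb : Kstep K pb -> forall a b, a <= b -> K a <= K b.
Proof.
  intros HK a b H. replace b with (a + Z.of_nat (Z.to_nat (b - a))) by lia.
  apply (K_mono_n K pb HK).
Qed.

Lemma K_zero_before K pb : Kstep K pb -> forall j i, j < i -> K j = K i -> pb j = false.
Proof.
  intros HK j i H E. pose proof (K_mono K pb HK (j+1) i ltac:(lia)). rewrite HK in H0.
  destruct (pb j); [lia|reflexivity].
Qed.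

Lemma K_gt K pb : Kstep K pb -> forall i j, pb i = true -> i < j -> K i + 1 <= K j.
Proof.
  intros HK i j Hp H. pose proof (K_mono K pb HK (i+1) j ltac:(lia)). rewrite HK, Hp in H0. lia.
Qed.

Lemma exists_one K pb : Kstep K pb -> forall (n : nat) a, K a < K (a + Z.of_nat n) ->
  exists i', a <= i' < a + Z.of_nat n /\ K i' = K a /\ pb i' = true.
Proof.
  intros HK n. induction n as [|n IH]; intros a H.
  - rewrite Z.add_0_r in H. lia.
  - rewrite Nat2Z.inj_succ, <- Z.add_1_r, Z.add_assoc, HK in H.
    pose proof (K_mono_n K pb HK n a).
    destruct (Z.eq_dec (K (a + Z.of_nat n)) (K a)) as [E|E].
    + exists (a + Z.of_nat n). split; [lia|]. split; [exact E|].
      destruct (pb (a + Z.of_nat n)); [reflexivity|lia].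
    + destruct (IH a ltac:(lia)) as [i' [A [B C]]]. exists i'. split; [lia|]. auto.
Qed.

Lemma c_at c K pb : Cform c K pb -> forall j y, c (-j, y) = if Z.eqb y (- K j) then Half (pb j) else Undef.
Proof. intros Hc j y. rewrite Hc, Z.opp_involutive. reflexivity. Qed.

Lemma c_path c K pb : Cform c K pb -> forall j, c (-j, - K j) = Half (pb j).
Proof. intros Hc j. rewrite (c_at c K pb Hc), Z.eqb_refl. reflexivity. Qed.

Lemma c_left c K pb : Cform c K pb -> Kstep K pb -> forall i j, pb i = true -> i < j -> c (-j, - K i) = Undef.
Proof.
  intros Hc HK i j Hp H. rewrite (c_at c K pb Hc).
  pose proof (K_gt K pb HK i j Hp H).
  destruct (Z.eqb_spec (- K i) (- K j)); [lia|reflexivity].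
Qed.

Lemma c_right c K pb : Cform c K pb -> Kstep K pb -> forall i j, j < i -> zeroish (c (-j, - K i)).
Proof.
  intros Hc HK i j H. rewrite (c_at c K pb Hc).
  destruct (Z.eqb_spec (- K i) (- K j)); [|right; reflexivity].
  left. rewrite (K_zero_before K pb HK j i H ltac:(lia)). reflexivity.
Qed.

Lemma nl_fire c K pb : Cform c K pb -> Kstep K pb -> forall i, pb i = true -> nonlocal_cond c (-i+1, - K i).
Proof.
  intros Hc HK i Hp. split; [|split].
  - rewrite addW. replace (-i+1-1) with (-i) by ring. rewrite (c_path c K pb Hc), Hp. reflexivity.
  - replace (-i+1) with (-(i-1)) by ring. apply (c_right c K pb Hc HK). lia.
  - intros r Hr. unfold addc, scalec, dirE; simpl.
    replace (-i + 1 + r * 1) with (-(i-1-r)) by ring. replace (- K i + r * 0) with (- K i) by ring.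
    apply (c_right c K pb Hc HK). lia.
Qed.

Lemma cfg1_E c K pb : Cform c K pb -> Kstep K pb -> forall i, pb i = true -> cfgc c 1 (-i+1, - K i) = Def false true.
Proof.
  intros Hc HK i Hp. simpl. unfold F. apply loc_def. apply nl_cond. apply (nl_fire c K pb Hc HK i Hp).
Qed.

Lemma claimDef c K pb : Cform c K pb -> Kstep K pb ->
  forall (d : nat) i, pb i = true -> isDef (cfgc c (S d) (-i - Z.of_nat d, - K i)).
Proof.
  intros Hc HK.
  assert (G : forall (D d : nat) i, (d <= D)%nat -> pb i = true -> isDef (cfgc c (S d) (-i - Z.of_nat d, - K i))).
  2:{ intros d i; apply (G d d i); lia. }
  induction D as [|D IH]; intros d i Hd Hp.
  - assert (d = 0%nat) by lia. subst d. simpl Z.of_nat. rewrite Z.sub_0_r.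
    change (cfgc c 1) with (F c). unfold F, local_rule.
    rewrite addE. pose proof (cfg1_E c K pb Hc HK i Hp) as E1. simpl in E1. unfold F in E1.
    unfold local_rule in E1.
    rewrite nl_nocond.
    2:{ intros [_ [Hz _]]. rewrite (c_path c K pb Hc), Hp in Hz. destruct Hz; discriminate. }
    rewrite (c_path c K pb Hc), Hp. rewrite (nl_cond c (-i+1, - K i) (nl_fire c K pb Hc HK i Hp)).
    simpl. exact I.
  - destruct (Nat.eq_dec d (S D)) as [Ed|Ed]; [|apply IH; [lia|exact Hp]].
    subst d. set (u := (-i - Z.of_nat (S D), - K i)).
    rewrite cfgc_S. set (C := cfgc c (S D)).
    destruct (classic (isDef (C u))) as [HD|HD].
    { destruct (isDef_ex _ HD) as [a [b E]]. rewrite (F_def _ _ _ _ E). exact I. }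
    assert (Hcu : c u = Undef).
    { unfold u. replace (-i - Z.of_nat (S D)) with (- (i + Z.of_nat (S D))) by ring.
      apply (c_left c K pb Hc HK); [exact Hp|lia]. }
    assert (HCu : C u = Undef).
    { destruct (undef_fwd c u Hcu (S D)) as [E|[a [b E]]]; [exact E|]. exfalso; apply HD. unfold C. rewrite E; exact I. }
    assert (HN : ~ nonlocal_cond C u).
    { intros [HW _]. apply half_bwd in HW. unfold u in HW. rewrite addW in HW.
      replace (-i - Z.of_nat (S D) - 1) with (- (i + Z.of_nat (S D) + 1)) in HW by ring.
      rewrite (c_left c K pb Hc HK i) in HW; [discriminate|exact Hp|lia]. }
    assert (HE : exists a b, nonlocal_rule C (addc u dirE) = Def a b).
    { assert (Hle : (D <= D)%nat) by lia. pose proof (IH D i Hle Hp) as HI.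
      destruct (isDef_ex _ HI) as [a [b E]]. exists a, b. apply nl_def.
      unfold u. rewrite addE. replace (-i - Z.of_nat (S D) + 1) with (-i - Z.of_nat D) by lia.
      exact E. }
    assert (HS : exists s'', sumbit (nonlocal_rule C (addc u dirS)) = Some s'').
    { unfold u. rewrite addS. set (j := i + Z.of_nat (S D)).
      replace (-i - Z.of_nat (S D)) with (-j) by (unfold j; ring).
      assert (HC1 : exists s'', sumbit (C (-j, - K i - 1)) = Some s'').
      { destruct (Z.eq_dec (K j) (K i + 1)) as [EK|EK].
        - assert (Hh : c (-j, - K i - 1) = Half (pb j)).
          { rewrite (c_at c K pb Hc). replace (- K i - 1) with (- K j) by lia. rewrite Z.eqb_refl. reflexivity. }
          destruct (half_fwd _ _ _ Hh (S D)) as [E|[t E]]; exists (pb j); unfold C; rewrite E; reflexivity.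
        - pose proof (K_gt K pb HK i j Hp ltac:(unfold j; lia)).
          assert (Hj : j = (i+1) + Z.of_nat D) by (unfold j; lia).
          assert (Ki1 : K (i+1) = K i + 1) by (rewrite HK, Hp; ring).
          assert (Hlt : K (i+1) < K (i+1 + Z.of_nat D)) by (rewrite <- Hj; lia).
          destruct (exists_one K pb HK D (i+1) Hlt) as [i' [A1 [A2 A3]]].
          rewrite Ki1 in A2.
          pose proof (IH (Z.to_nat (j - i')) i' ltac:(lia) A3) as HI.
          destruct (isDef_ex _ HI) as [a [b E]].
          replace (- i' - Z.of_nat (Z.to_nat (j - i'))) with (-j) in E by lia.
          rewrite A2 in E. replace (- (K i + 1)) with (- K i - 1) in E by ring.
          pose proof (persist_le_def _ _ _ _ (S (Z.to_nat (j-i'))) (S D) ltac:(lia) E) as E'. exists a. unfold C. rewrite E'. reflexivity. }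
      destruct HC1 as [s'' E]. exists s''. apply nl_some. exact E. }
    unfold F, local_rule. rewrite (nl_nocond C u HN), HCu.
    destruct HE as [a [b HE]]. rewrite HE. destruct HS as [s'' HS]. rewrite HS. exact I.
Qed.


Lemma trunc_S n z : trunc (S n) z = (trunc n z + Nat.b2n (z n) * 2 ^ n)%nat.
Proof. simpl. destruct (z n); simpl; lia. Qed.

Lemma trunc_lt n z : (trunc n z < 2 ^ n)%nat.
Proof.
  induction n; simpl; [lia|]. destruct (z n); lia.
Qed.

Lemma low_bits a n X j : (a < 2 ^ n)%nat -> (j < n)%nat -> Nat.testbit (a + 2 ^ n * X) j = Nat.testbit a j.
Proof.
  intros Ha Hj. rewrite <- (Nat.mod_pow2_bits_low (a + 2^n * X) n j Hj).
  rewrite Nat.mul_comm, Nat.Div0.mod_add, Nat.mod_small by exact Ha. reflexivity.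
Qed.

Lemma top_bit a n b : (a < 2 ^ n)%nat -> Nat.testbit (a + 2 ^ n * Nat.b2n b) n = b.
Proof.
  intros Ha. rewrite Nat.testbit_eqb. rewrite Nat.mul_comm, Nat.div_add by (apply Nat.pow_nonzero; lia).
  rewrite Nat.div_small by exact Ha. destruct b; reflexivity.
Qed.

Lemma trunc_bit n z j : (j < n)%nat -> Nat.testbit (trunc n z) j = z j.
Proof.
  induction n; intro Hj; [lia|]. rewrite trunc_S, Nat.mul_comm.
  destruct (Nat.eq_dec j n) as [->|Hne].
  - apply top_bit, trunc_lt.
  - rewrite low_bits; [apply IHn; lia|apply trunc_lt|lia].
Qed.


Lemma even_trunc z k : Nat.even (trunc (S (S k)) z) = negb (z 0%nat).
Proof.
  rewrite <- Nat.negb_odd, <- Nat.bit0_odd, trunc_bit by lia. reflexivity.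
Qed.


Lemma T_even z k : z 0%nat = false -> T z k = z (S k).
Proof.
  intro H0. unfold T. replace (k+2)%nat with (S (S k)) by lia.
  unfold Tnat. rewrite even_trunc, H0. simpl negb. cbv iota.
  rewrite Nat.div2_bits. apply trunc_bit; lia.
Qed.

Definition sumseq (z cc : nat -> bool) (d : nat) : bool :=
  match d with O => false | S d' => xorb (z d) (xorb (z d') (cc d')) end.

Lemma adder z cc : z 0%nat = true -> cc 0%nat = true ->
  (forall d, cc (S d) = maj (z (S d)) (z d) (cc d)) ->
  forall n, (3 * trunc (S n) z + 1 = trunc (S n) (sumseq z cc) + 2 ^ (S n) * (Nat.b2n (cc n) + Nat.b2n (z n)))%nat.
Proof.
  intros Hz Hc HC n. induction n as [|n IH].
  - simpl. rewrite Hz, Hc. reflexivity.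
  - rewrite (trunc_S (S n) z), (trunc_S (S n) (sumseq z cc)).
    rewrite (Nat.pow_succ_r' 2 (S n)).
    set (P := (2 ^ S n)%nat) in *. set (A := trunc (S n) z) in *. set (B := trunc (S n) (sumseq z cc)) in *.
    assert (E : (Nat.b2n (cc n) + Nat.b2n (z n) + 3 * Nat.b2n (z (S n)) =
                 Nat.b2n (sumseq z cc (S n)) + 2 * Nat.b2n (cc (S n)) + 2 * Nat.b2n (z (S n)))%nat).
    { simpl sumseq. rewrite HC. destruct (z (S n)), (z n), (cc n); reflexivity. }
    assert (E2 : (P * (Nat.b2n (cc n) + Nat.b2n (z n) + 3 * Nat.b2n (z (S n))) =
                 P * (Nat.b2n (sumseq z cc (S n)) + 2 * Nat.b2n (cc (S n)) + 2 * Nat.b2n (z (S n))))%nat)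
      by (rewrite E; reflexivity).
    lia.
Qed.

Lemma T_odd z cc k : z 0%nat = true -> cc 0%nat = true ->
  (forall d, cc (S d) = maj (z (S d)) (z d) (cc d)) ->
  T z k = xorb (z (S k)) (xorb (z k) (cc k)).
Proof.
  intros Hz Hc HC. unfold T. replace (k+2)%nat with (S (S k)) by lia.
  unfold Tnat. rewrite even_trunc, Hz. simpl negb. cbv iota.
  rewrite Nat.div2_bits. rewrite (adder z cc Hz Hc HC (S k)).
  rewrite low_bits by (apply trunc_lt || lia). rewrite trunc_bit by lia. reflexivity.
Qed.


Definition sbit (s : state) : bool := match sumbit s with Some b => b | None => false end.
Definition cbit (s : state) : bool := match s with Def _ x => x | _ => false end.

Local Open Scope Z_scope.

Definition Rrow (c : config) (K : Z -> Z) (i j : nat) : bool :=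
  sbit (lim c (-(Z.of_nat i + Z.of_nat j), - K (Z.of_nat i))).

Lemma lim_sbit c v b : sumbit (lim c v) = Some b -> sbit (lim c v) = b.
Proof. intro H. unfold sbit. rewrite H. reflexivity. Qed.

Lemma TR c K pb : Cform c K pb -> Kstep K pb -> forall i k, T (Rrow c K i) k = Rrow c K (S i) k.
Proof.
  intros Hc HK i k. set (zi := Z.of_nat i).
  assert (HSi : Z.of_nat (S i) = zi + 1) by (unfold zi; lia).
  assert (R0 : sumbit (lim c (-(zi + Z.of_nat 0), - K zi)) = Some (pb zi)).
  { apply lim_of_half. replace (-(zi + Z.of_nat 0)) with (-zi) by (simpl; ring). apply (c_path c K pb Hc). }
  destruct (pb zi) eqn:Ep.
  -
    set (z := Rrow c K i). set (cc := fun d : nat => cbit (lim c (-(zi + Z.of_nat d), - K zi))).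
    assert (LD : forall d : nat, lim c (-(zi + Z.of_nat d), - K zi) = Def (z d) (cc d)).
    { intro d. pose proof (claimDef c K pb Hc HK d zi Ep) as HD.
      destruct (isDef_ex _ HD) as [a [b E]]. apply lim_of_def in E.
      replace (-zi - Z.of_nat d) with (-(zi + Z.of_nat d)) in E by ring.
      unfold z, cc, Rrow. fold zi. rewrite E. reflexivity. }
    assert (Hz0 : z 0%nat = true).
    { rewrite LD in R0. simpl in R0. congruence. }
    assert (Hc0 : cc 0%nat = true).
    { pose proof (LD 0%nat) as L0.
      assert (Hu : c (-(zi + Z.of_nat 0), - K zi) = Half true).
      { replace (-(zi + Z.of_nat 0)) with (-zi) by (simpl; ring). rewrite (c_path c K pb Hc), Ep. reflexivity. }
      destruct (lim_rel_half c _ _ _ Hu L0) as [_ [s' [c' [A1 A2]]]].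
      rewrite addE in A1. replace (-(zi + Z.of_nat 0) + 1) with (-zi+1) in A1 by (simpl; ring).
      rewrite (lim_of_def c _ 1 _ _ (cfg1_E c K pb Hc HK zi Ep)) in A1. inversion A1; subst. rewrite A2. reflexivity. }
    assert (HR : forall d : nat, cc (S d) = maj (z (S d)) (z d) (cc d) /\
                 Rrow c K (S i) d = xorb (z (S d)) (xorb (z d) (cc d))).
    { intro d. set (u := (-(zi + Z.of_nat (S d)), - K zi)).
      assert (Hcu : c u = Undef).
      { unfold u. apply (c_left c K pb Hc HK zi); [exact Ep|lia]. }
      assert (HN : forall n, ~ nonlocal_cond (cfgc c n) u).
      { intros n [HW _]. apply half_bwd in HW. unfold u in HW. rewrite addW in HW.
        replace (-(zi + Z.of_nat (S d)) - 1) with (-(zi + Z.of_nat (S d) + 1)) in HW by ring.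
        rewrite (c_left c K pb Hc HK zi) in HW; [discriminate|exact Ep|lia]. }
      destruct (lim_rel_undef c u _ _ Hcu HN (LD (S d))) as [s' [c' [s'' [A1 [A2 [A3 A4]]]]]].
      unfold u in A1. rewrite addE in A1.
      replace (-(zi + Z.of_nat (S d)) + 1) with (-(zi + Z.of_nat d)) in A1 by lia.
      rewrite LD in A1. inversion A1; subst s' c'.
      assert (ER : Rrow c K (S i) d = s'').
      { unfold Rrow. rewrite HSi, HK, Ep. apply lim_sbit. unfold u in A2. rewrite addS in A2.
        replace (-(zi + 1 + Z.of_nat d)) with (-(zi + Z.of_nat (S d))) by lia.
        replace (-(K zi + 1)) with (- K zi - 1) by ring. exact A2. }
      rewrite ER. split; [exact A4|]. rewrite A3. destruct s'', (z d), (cc d); reflexivity. }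
    rewrite (T_odd z cc k Hz0 Hc0 (fun d => proj1 (HR d))). symmetry. apply (proj2 (HR k)).
  -
    assert (Hz0 : Rrow c K i 0%nat = false).
    { unfold Rrow. fold zi. apply lim_sbit. exact R0. }
    rewrite (T_even _ k Hz0). unfold Rrow. fold zi. rewrite HSi, HK, Ep, Z.add_0_r.
    f_equal. f_equal. f_equal. lia.
Qed.


Lemma kpref_S p i : kpref p (S i) = (kpref p i + if pbit p i then 1 else 0)%nat.
Proof.
  unfold kpref, ones, pbit. revert i. induction p as [|a p IH]; intro i.
  - destruct i; reflexivity.
  - destruct i as [|i].
    + destruct a; reflexivity.
    + change (firstn (S (S i)) (a :: p)) with (a :: firstn (S i) p).
      change (firstn (S i) (a :: p)) with (a :: firstn i p).
      change (nth (S i) (a :: p) false) with (nth i p false).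
      specialize (IH i). destruct a; cbn [filter length]; lia.
Qed.

Lemma kpref_len p : kpref p (length p) = ones p.
Proof. unfold kpref. rewrite firstn_all. reflexivity. Qed.

Local Open Scope Z_scope.

Definition mZ (p : list bool) : Z := Z.of_nat (length p).
Definition pbZ (p : list bool) (j : Z) : bool := pbit p (Z.to_nat (j mod mZ p)).
Definition KZ (p : list bool) (j : Z) : Z :=
  Z.of_nat (kpref p (Z.to_nat (j mod mZ p))) + (j / mZ p) * Z.of_nat (ones p).

Lemma KZ_step p : (1 <= length p)%nat -> Kstep (KZ p) (pbZ p).
Proof.
  intros Hm j. unfold KZ, pbZ. set (m := mZ p).
  assert (Hm0 : 0 < m) by (unfold m, mZ; lia).
  pose proof (Z.mod_pos_bound j m Hm0) as Hr.
  pose proof (Z.div_mod j m ltac:(lia)) as Hd.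
  set (r := j mod m) in *. set (q := j / m) in *.
  destruct (Z.eq_dec (r + 1) m) as [Er|Er].
  - assert (E1 : j + 1 = 0 + (q + 1) * m) by lia.
    rewrite E1, Z.mod_add, Z.div_add by lia. rewrite Z.mod_0_l, Z.div_0_l by lia.
    assert (Hrn : Z.to_nat r = (length p - 1)%nat) by (unfold m, mZ in Er; lia).
    rewrite Hrn. pose proof (kpref_S p (length p - 1)) as HS.
    replace (S (length p - 1)) with (length p) in HS by lia. rewrite kpref_len in HS.
    simpl (Z.to_nat 0). change (kpref p 0) with 0%nat.
    destruct (pbit p (length p - 1)); lia.
  - assert (E1 : j + 1 = (r + 1) + q * m) by lia.
    rewrite E1, Z.mod_add, Z.div_add by lia. rewrite Z.mod_small, Z.div_small by lia.
    replace (Z.to_nat (r+1)) with (S (Z.to_nat r)) by lia. rewrite kpref_S.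
    destruct (pbit p (Z.to_nat r)); lia.
Qed.

Lemma c0_form p : (1 <= length p)%nat -> Cform (c0 p) (KZ p) (pbZ p).
Proof.
  intros Hm x y. unfold c0, KZ, pbZ, mZ. cbv zeta.
  unfold addc, upos, scalec, vp. cbn [fst snd].
  set (m := Z.of_nat (length p)).
  assert (Hm0 : 0 < m) by (unfold m; lia).
  pose proof (Z.mod_pos_bound (-x) m Hm0) as Hr.
  pose proof (Z.div_mod (-x) m ltac:(lia)) as Hd.
  set (r := (-x) mod m) in *. set (q := (-x) / m) in *.
  replace (x =? - Z.of_nat (Z.to_nat r) + q * - m) with true
    by (symmetry; apply Z.eqb_eq; rewrite Z2Nat.id by lia; lia).
  simpl andb.
  replace (- Z.of_nat (kpref p (Z.to_nat r)) + q * - Z.of_nat (ones p))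
    with (- (Z.of_nat (kpref p (Z.to_nat r)) + q * Z.of_nat (ones p))) by ring.
  reflexivity.
Qed.

Lemma KZ0 p : (1 <= length p)%nat -> KZ p 0 = 0.
Proof. intro Hm. unfold KZ. rewrite Z.mod_0_l, Z.div_0_l by (unfold mZ; lia). reflexivity. Qed.


Theorem mainTheorem12 (p : list bool) (Hm : (1 <= length p)%nat) :
  exists b : nat -> bool,
    (forall j : nat,
       exists s : state,
         (exists N : nat, forall n : nat, (N <= n)%nat ->
            cfg p n ((- Z.of_nat j)%Z, 0%Z) = s) /\
         sumbit s = Some (b j)) /\
    Q b = pinf p.
Proof.
  set (c := c0 p). pose proof (c0_form p Hm) as Hc. pose proof (KZ_step p Hm) as HK.
  set (K := KZ p) in *. set (pb := pbZ p) in *.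
  assert (K0 : K 0%Z = 0%Z) by exact (KZ0 p Hm).
  assert (row0 : forall j : nat, exists bb, sumbit (lim c (- Z.of_nat j, 0%Z)) = Some bb).
  { intro j. destruct (Z.eq_dec (K (Z.of_nat j)) 0) as [E|E].
    - exists (pb (Z.of_nat j)). apply lim_of_half. rewrite (c_at c K pb Hc), E. reflexivity.
    - pose proof (K_mono K pb HK 0 (Z.of_nat j) ltac:(lia)) as Hmo.
      assert (Hlt : (K 0 < K (0 + Z.of_nat j))%Z) by (rewrite Z.add_0_l; lia).
      destruct (exists_one K pb HK j 0 Hlt) as [i' [A1 [A2 A3]]].
      pose proof (claimDef c K pb Hc HK (Z.to_nat (Z.of_nat j - i')) i' A3) as HD.
      destruct (isDef_ex _ HD) as [a [b E1]]. apply lim_of_def in E1.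
      replace (- i' - Z.of_nat (Z.to_nat (Z.of_nat j - i')))%Z with (- Z.of_nat j)%Z in E1 by lia.
      rewrite A2, K0 in E1. change (- 0)%Z with 0%Z in E1. exists a. rewrite E1. reflexivity. }
  exists (fun j => sbit (lim c (- Z.of_nat j, 0%Z))).
  split.
  - intro j. exists (lim c (- Z.of_nat j, 0%Z)). split.
    + exact (lim_spec c _).
    + destruct (row0 j) as [bb E]. rewrite E. unfold sbit. rewrite E. reflexivity.
  - assert (iterR : forall i, Nat.iter i T (fun j => sbit (lim c (- Z.of_nat j, 0%Z))) = Rrow c K i).
    { induction i as [|i IH].
      - apply functional_extensionality. intro j. unfold Rrow. change (Z.of_nat 0) with 0%Z.
        rewrite K0, Z.add_0_l. reflexivity.
      - simpl Nat.iter. rewrite IH. apply functional_extensionality. intro k.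
        apply (TR c K pb Hc HK). }
    apply functional_extensionality. intro i. unfold Q. rewrite iterR.
    unfold Rrow. rewrite Z.add_0_r. apply lim_sbit.
    assert (Hp : pinf p i = pb (Z.of_nat i)).
    { unfold pinf, pb, pbZ, mZ. rewrite <- Nat2Z.inj_mod, Nat2Z.id. reflexivity. }
    rewrite Hp. apply lim_of_half. apply (c_path c K pb Hc).
Qed.
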